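(* Let $p$ be a prime, $k\ge2$ an integer, $R=\{t^k: t\in\mathbb F_p^*\}$, and $G=\{x\mapsto rx+b: r\in R,\ b\in\mathbb F_p\}\le{\rm AGL}(1,p)$. Then every element of $G\wr S_k$, in the product action on $\mathbb F_p^k$, is an imprimitive permutation of $\mathbb F_p^k$.
   Context: For $H\le{\rm Sym}(\Delta)$ and $K\le S_k$, $H\wr K$ in product action acts on $\Delta^k$ by applying $h_i$ to the $i$-th coordinate and permuting coordinates by $\sigma\in K$. A permutation of a set $\Omega$ of size $n$ is imprimitive if it preserves a partition of $\Omega$ into blocks of equal size $m$ with $1<m<n$. *)

(* Defs.v *)
From HB Require Import structures.
From mathcomp Require Import all_boot all_order all_algebra all_fingroup.
Set Implicit Arguments. Unset Strict Implicit. Unset Printing Implicit Defensive.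
Import GRing.Theory.
Local Open Scope ring_scope.

Definition kth_powers (p k : nat) : pred 'F_p :=
  fun r => [exists t : 'F_p, (t != 0) && (r == t ^+ k)].

Arguments kth_powers : clear implicits.

(* The element ((x |-> r_i x + b_i)_i ; s) of G wr S_k acting in product
   action on F_p^k = {ffun 'I_k -> 'F_p}: coordinates are permuted by s
   and then the affine map h_i is applied in coordinate i. *)
Definition wreath_act (p k : nat) (r b : 'I_k -> 'F_p) (s : 'S_k)
  (x : {ffun 'I_k -> 'F_p}) : {ffun 'I_k -> 'F_p} :=
  [ffun i => r i * x ((s^-1)%g i) + b i].

Definition imprimitive (T : finType) (f : T -> T) : Prop :=
  exists (P : {set {set T}}) (m : nat),
    [/\ partition P [set: T], (1 < m)%N, (m < #|T|)%N,
        (forall B, B \in P -> #|B| = m) &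
        (forall B, B \in P -> f @: B \in P)].

(* Main.v *)
Require Import Defs.
From HB Require Import structures.
From mathcomp Require Import all_boot all_order all_algebra all_fingroup.
From mathcomp Require Import ring.
Set Implicit Arguments. Unset Strict Implicit. Unset Printing Implicit Defensive.
Import GRing.Theory.
Local Open Scope ring_scope.

Section Gen.
Variables (p k : nat) (r b : 'I_k -> 'F_p) (s : 'S_k).
Hypothesis rnz : forall i, r i != 0.
Local Notation T := {ffun 'I_k -> 'F_p}.
Definition Lin (x : T) : T := [ffun i => r i * x ((s^-1)%g i)].

Lemma wreath_diff x y : wreath_act r b s x - wreath_act r b s y = Lin (x - y).
Proof. by apply/ffunP=> i; rewrite !ffunE; ring. Qed.

Lemma wreath_inj : injective (wreath_act r b s).
Proof.
move=> x y /ffunP H; apply/ffunP=> j.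
have := H (s j); rewrite !ffunE permK => /addIr /mulfI; apply; exact: rnz.
Qed.

Lemma blocks_imprim (W : {set T}) :
  0 \in W -> (forall x y, x \in W -> y \in W -> x - y \in W) ->
  (forall x, x \in W -> Lin x \in W) -> (1 < #|W|)%N -> (#|W| < #|T|)%N ->
  imprimitive (wreath_act r b s).
Proof.
move=> W0 WB WL W1 WT.
have WD x y : x \in W -> y \in W -> x + y \in W.
  by move=> xW yW; rewrite -[y]opprK WB // -sub0r WB.
pose R := fun x y : T => y - x \in W.
have eqR : {in [set: T] & &, equivalence_rel R}.
  move=> x y z _ _ _; split; first by rewrite /R subrr.
  rewrite /R => Hxy; apply/idP/idP => H.
    by have := WB _ _ H Hxy; rewrite opprB addrA subrK.
  by have := WD _ _ H Hxy; rewrite addrA subrK.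
pose B x := [set y | R x y].
have cardB x : #|B x| = #|W|.
  have -> : B x = (fun w : T => w + x) @: W.
    apply/setP=> y; rewrite inE; apply/idP/imsetP => [H|[w wW ->]].
      by exists (y - x) => //; rewrite subrK.
    by rewrite /R addrK.
  by apply: card_imset; apply: addIr.
have PB x : [set y in [set: T] | R x y] = B x by apply/setP=> y; rewrite !inE.
exists (equivalence_partition R [set: T]), #|W|; split => //.
- exact: equivalence_partitionP.
- by move=> _ /imsetP[x _ ->]; rewrite PB cardB.
move=> _ /imsetP[x _ ->].
rewrite PB.
have -> : wreath_act r b s @: B x = B (wreath_act r b s x).
  apply/eqP; rewrite eqEcard (card_imset _ wreath_inj) !cardB leqnn andbT.
  apply/subsetP=> _ /imsetP[y yB ->]; rewrite inE /R wreath_diff WL //.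
  by move: yB; rewrite inE.
by apply/imsetP; exists (wreath_act r b s x) => //; rewrite PB.
Qed.

Lemma iter_perm_inj n : injective (iter n s).
Proof. elim: n => [|n IH] //=; exact: inj_comp (@perm_inj _ s) IH. Qed.

End Gen.

Lemma kth_prod (p k : nat) (I : finType) (F : I -> 'F_p) :
  (forall i, kth_powers p k (F i)) -> kth_powers p k (\prod_i F i).
Proof.
move=> H; apply: (big_ind (kth_powers p k)) => //.
  by apply/existsP; exists 1; rewrite oner_neq0 expr1n.
move=> x y /existsP[t /andP[t0 /eqP->]] /existsP[u /andP[u0 /eqP->]].
by apply/existsP; exists (t * u); rewrite exprMn eqxx andbT mulf_neq0.
Qed.

Lemma card_T_gt (p k : nat) : prime p -> (2 <= k)%N ->
  (#|'F_p| < #|{ffun 'I_k -> 'F_p}|)%N.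
Proof.
move=> pp k2; rewrite card_ffun [#|'I_k|]card_ord card_Fp //.
by rewrite -{1}(expn1 p) ltn_exp2l //; exact: prime_gt1.
Qed.

Definition ei (p k : nat) (i : 'I_k) : {ffun 'I_k -> 'F_p} := [ffun x => (x == i)%:R].

Lemma caseA (p k : nat) r b (s : 'S_k) (i0 : 'I_k) (j : nat) :
  (forall i, r i != 0) -> (0 < j < k)%N -> iter j s i0 = i0 ->
  imprimitive (wreath_act (p:=p) r b s).
Proof.
move=> rnz /andP[j0 jk] aj.
pose a l := iter l s i0.
pose J := [set a (nat_of_ord l) | l : 'I_j].
have i0J : i0 \in J by apply/imsetP; exists (Ordinal j0).
have Jinv i : (s^-1)%g i \in J -> i \in J.
  case/imsetP=> l _ h.
  have -> : i = a l.+1 by rewrite /a iterS -/(a l) -h permKV.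
  case: (ltnP l.+1 j) => lj; first by apply/imsetP; exists (Ordinal lj).
  have -> : l.+1 = j by apply/eqP; rewrite eqn_leq lj (ltn_ord l).
  by rewrite /a aj.
have [m _ mJ] : exists2 m, m \in [set: 'I_k] & m \notin J.
  apply/subsetPn/negP => /subset_leq_card; rewrite cardsT card_ord.
  move/leq_trans/(_ (leq_imset_card _ _)); rewrite card_ord.
  by move=> H; have := leq_ltn_trans H jk; rewrite ltnn.
pose W := [set x : {ffun 'I_k -> 'F_p} | [forall i, (i \notin J) ==> (x i == 0)]].
apply: (@blocks_imprim _ _ r b s rnz W).
- by rewrite inE; apply/forallP => i; rewrite ffunE eqxx implybT.
- move=> x y; rewrite !inE => /forallP Hx /forallP Hy; apply/forallP=> i.
  apply/implyP=> iJ; rewrite !ffunE (eqP (implyP (Hx i) iJ)) (eqP (implyP (Hy i) iJ)).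
  by rewrite subrr.
- move=> x; rewrite !inE => /forallP Hx; apply/forallP=> i.
  apply/implyP=> iJ; rewrite ffunE.
  have iJ' : (s^-1)%g i \notin J by apply/negP => /Jinv; apply/negP.
  by rewrite (eqP (implyP (Hx _) iJ')) mulr0.
- apply/card_gt1P; exists 0, (ei p i0); split.
  + by rewrite inE; apply/forallP => i; rewrite ffunE eqxx implybT.
  + rewrite inE; apply/forallP => i; apply/implyP => iJ; rewrite ffunE.
    case: (eqVneq i i0) => [eii|nii]; first by rewrite eii i0J in iJ.
    by rewrite mulr0n.
  + apply/eqP => /ffunP /(_ i0); rewrite !ffunE eqxx => /eqP.
    by rewrite eq_sym oner_eq0.
- rewrite -cardsT; apply: proper_card; rewrite properT; apply/eqP => WT.
  have : ei p m \in W by rewrite WT inE.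
  by rewrite inE => /forallP/(_ m); rewrite mJ ffunE eqxx /= oner_eq0.
Qed.

Lemma caseB (p k' : nat) r b (s : 'S_k'.+1) : prime p -> (1 <= k')%N ->
  (forall i, kth_powers p k'.+1 (r i)) ->
  (forall j, (0 < j < k'.+1)%N -> iter j s ord0 != ord0) ->
  imprimitive (wreath_act (p:=p) r b s).
Proof.
move=> pp k1 rk hB.
have rnz i : r i != 0.
  by have /existsP[t /andP[t0 /eqP->]] := rk i; rewrite expf_neq0.
pose a l := iter l s ord0.
have ak : a k'.+1 = ord0.
  pose f (j : 'I_k'.+2) : 'I_k'.+1 := a j.
  have : ~~ injectiveb f.
    apply/negP => /injectiveP /leq_card; rewrite !card_ord.
    by rewrite ltnn.
  case/injectivePn => x [y xy fxy].
  have gen : forall x y : 'I_k'.+2, (x < y)%N -> a x = a y -> a k'.+1 = ord0.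
    move=> u v uv auv.
    have : a (v - u)%N = ord0.
      apply: (iter_perm_inj (s:=s) (n:=u)).
      by rewrite -iterD subnKC ?(ltnW uv) //; exact: esym auv.
    case: (ltnP (v - u)%N k'.+1) => h; last first.
      have e2 : (v - u)%N = k'.+1.
        apply/eqP; rewrite eqn_leq h andbT.
        by apply: leq_trans (leq_subr _ _) _; rewrite -ltnS.
      by rewrite e2.
    by move=> e; have := hB (v - u)%N; rewrite subn_gt0 uv h => /(_ isT) /eqP.
  case: (ltngtP x y) => h.
  - exact: gen h fxy.
  - exact: gen h (esym fxy).
  - by move/val_inj: h xy => ->; rewrite eqxx.
pose pi (j : nat) := \prod_(l < j) r (a l.+1).
have pis j : pi j.+1 = pi j * r (a j.+1) by rewrite /pi big_ord_recr.
have [mu mu0 muk] : exists2 mu, mu != 0 & pi k'.+1 = mu ^+ k'.+1.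
  have := kth_prod (F := fun l : 'I_k'.+1 => r (a l.+1)) (fun l => rk _).
  by case/existsP => t /andP[t0 /eqP e]; exists t.
pose nu := mu^-1.
have numu : nu * mu = 1 by rewrite mulVf.
pose v : {ffun 'I_k'.+1 -> 'F_p} :=
  [ffun i => \sum_(j < k'.+1) nu ^+ j * pi j * (i == a j)%:R].
have Lv i : r i * v ((s^-1)%g i) = mu * v i.
  rewrite !ffunE mulr_sumr.
  have step j : r i * (nu ^+ j * pi j * ((s^-1)%g i == a j)%:R)
      = nu ^+ j * pi j.+1 * (i == a j.+1)%:R.
    case: (eqVneq ((s^-1)%g i) (a j)) => [e|ne].
      have -> : i = a j.+1 by rewrite /a iterS -/(a j) -e permKV.
      by rewrite eqxx pis; ring.
    have ne' : (i == a j.+1) = false.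
      by apply/negbTE; apply: contra_neq ne => ->; rewrite /a iterS permK.
    by rewrite ne' /= !mulr0.
  under eq_bigr => j _ do rewrite step.
  rewrite big_ord_recr /= big_ord_recl /= mulrDr mulr_sumr.
  have ak' : s (a k') = ord0 := ak.
  have pi0 : pi 0%N = 1 by rewrite /pi big_ord0.
  rewrite ak' muk pi0.
  rewrite [X in _ = _ + X](eq_bigr (fun j : 'I_k' => nu ^+ j * pi j.+1 * (i == s (a j))%:R)); last first.
    move=> j _; have -> : bump 0 j = j.+1 by [].
    by rewrite add0n exprS !mulrA (mulrC mu nu) numu mul1r.
  rewrite expr0 !mul1r addrC; congr (_ + _).
  by rewrite exprSr mulrA -exprMn numu expr1n mul1r.
have v0 : v ord0 = 1.
  rewrite ffunE big_ord_recl /= big1 ?addr0.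
    by rewrite expr0 /pi big_ord0 !mul1r.
  move=> j _.
  have := hB j.+1; rewrite !ltnS ltn_ord => /(_ isT) hj.
  by rewrite add0n eq_sym (negbTE hj) mulr0.
clearbody v.
pose W := [set [ffun i => c * v i] | c : 'F_p].
apply: (@blocks_imprim _ _ r b s rnz W).
- by apply/imsetP; exists 0 => //; apply/ffunP => i; rewrite !ffunE mul0r.
- move=> _ _ /imsetP[c _ ->] /imsetP[d _ ->]; apply/imsetP; exists (c - d) => //.
  by apply/ffunP => i; rewrite !ffunE mulrBl.
- move=> _ /imsetP[c _ ->]; apply/imsetP; exists (c * mu) => //.
  by apply/ffunP => i; rewrite !ffunE mulrCA Lv mulrA.
- apply/card_gt1P; exists [ffun i => 0 * v i], [ffun i => 1 * v i].
  split; [exact: imset_f | exact: imset_f |].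
  apply/eqP => /ffunP/(_ ord0); rewrite !ffunE mul0r mul1r v0 => /eqP.
  by rewrite eq_sym oner_eq0.
- apply: leq_ltn_trans (leq_imset_card _ _) _.
  exact: card_T_gt.
Qed.

Theorem mainTheorem7 (p k : nat) (p_prime : prime p) (k_ge2 : (2 <= k)%N)
  (r b : 'I_k -> 'F_p) (s : 'S_k) :
  (forall i, kth_powers p k (r i)) ->
  imprimitive (wreath_act r b s).
Proof.
case: k k_ge2 r b s => [//|k'] k2 r b s rk.
have rnz i : r i != 0.
  by have /existsP[t /andP[t0 /eqP->]] := rk i; rewrite expf_neq0.
have [/existsP[j /andP[j0 /eqP aj]] | nex] :=
  boolP [exists j : 'I_k'.+1, (0 < j)%N && (iter j s ord0 == ord0)].
  by apply: (@caseA _ _ r b s ord0 j rnz) => //; rewrite j0 ltn_ord.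
apply: caseB => // j /andP[j0 jk]; apply/negP => /eqP e.
by move/existsP: nex; apply; exists (Ordinal jk); rewrite j0 /= e eqxx.
Qed.
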